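(* Let $t>0$, let $X\subset\mathbb{R}^d$ and $Y\subset\mathbb{R}^m$ be closed sets, and let $f:X\to Y$ be a $(1/t)$-bi-Hölder homeomorphism. Then for every $x_0\in X$ and every $T\in\mathrm{Tan}(X,x_0)$ there exist $T'\in\mathrm{Tan}(Y,f(x_0))$ and a $(1/t)$-bi-Hölder homeomorphism $g:T\to T'$.
   Context: A map $f:X\to Y$ is a $\beta$-bi-Hölder homeomorphism if it is a bijection and there is $C\ge1$ with $C^{-1}|x-y|^\beta\le|f(x)-f(y)|\le C|x-y|^\beta$ for all $x,y\in X$. With $\mathrm{exc}(A,B)=\sup_{a\in A}\inf_{b\in B}|a-b|$, closed sets $X_m\to X$ (Attouch–Wets) iff for every $r>0$, $\mathrm{exc}(X_m\cap\overline{B}(\mathbf{0},r),X)\to0$ and $\mathrm{exc}(X\cap\overline{B}(\mathbf{0},r),X_m)\to0$. A closed $T\ni\mathbf{0}$ belongs to $\mathrm{Tan}(X,x)$ if $r_j^{-1}(X-x)\to T$ for some $r_j\downarrow0$. *)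

(* Defs.v *)
From HB Require Import structures.
From mathcomp Require Import all_boot all_order all_algebra.
From mathcomp Require Import all_classical all_reals all_analysis.
Set Implicit Arguments. Unset Strict Implicit. Unset Printing Implicit Defensive.
Import Order.TTheory GRing.Theory Num.Theory.
Import numFieldNormedType.Exports.
Local Open Scope classical_set_scope.
Local Open Scope ring_scope.

Section Defs.
Variable R : realType.

Definition enorm (d : nat) (v : 'rV[R]_d) : R := Num.sqrt (\sum_(i < d) v ord0 i ^+ 2).

Definition cball0 (d : nat) (r : R) : set 'rV[R]_d := [set x | enorm x <= r].

(* inf_{b in B} |a - b|, in the extended reals (= +oo if B is empty) *)
Definition edist_set (d : nat) (a : 'rV[R]_d) (B : set 'rV[R]_d) : \bar R :=
  ereal_inf [set (enorm (a - b))%:E | b in B].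

(* exc(A,B) = sup_{a in A} inf_{b in B} |a - b|, with exc(empty, B) = 0 *)
Definition exc (d : nat) (A B : set 'rV[R]_d) : \bar R :=
  ereal_sup ([set 0%E] `|` [set edist_set a B | a in A]).

Definition AW_cvg (d : nat) (Xs : nat -> set 'rV[R]_d) (X : set 'rV[R]_d) : Prop :=
  forall r : R, 0 < r ->
    ((fun k => exc (Xs k `&` cball0 r) X) @ \oo --> 0%E) /\
    ((fun k => exc (X `&` cball0 r) (Xs k)) @ \oo --> 0%E).

Definition blowup (d : nat) (X : set 'rV[R]_d) (x : 'rV[R]_d) (r : R) : set 'rV[R]_d :=
  [set r^-1 *: (y - x) | y in X].

Definition Tan (d : nat) (X : set 'rV[R]_d) (x : 'rV[R]_d) : set (set 'rV[R]_d) :=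
  [set T : set 'rV[R]_d | closed T /\ T 0 /\
     exists rs : nat -> R,
       (forall j, 0 < rs j) /\ {homo rs : i j / (i <= j)%N >-> j <= i} /\
       (rs @ \oo --> 0) /\ AW_cvg (fun j => blowup X x (rs j)) T].

Definition biHolder_homeo (d m : nat) (beta : R) (X : set 'rV[R]_d) (Y : set 'rV[R]_m)
    (f : 'rV[R]_d -> 'rV[R]_m) : Prop :=
  [/\ (forall x, X x -> Y (f x)),
      (forall x y, X x -> X y -> f x = f y -> x = y),
      (forall y, Y y -> exists2 x, X x & f x = y) &
      exists C : R, 1 <= C /\ forall x y, X x -> X y ->
        C^-1 * (enorm (x - y)) `^ beta <= enorm (f x - f y) /\
        enorm (f x - f y) <= C * (enorm (x - y)) `^ beta].

End Defs.

(* Main.v *)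
Require Import Defs.
From HB Require Import structures.
From mathcomp Require Import all_boot all_order all_algebra.
From mathcomp Require Import all_classical all_reals all_analysis.
From mathcomp Require Import ring lra.
Set Implicit Arguments. Unset Strict Implicit. Unset Printing Implicit Defensive.
Import Order.TTheory GRing.Theory Num.Theory.
Import numFieldNormedType.Exports.
Local Open Scope classical_set_scope.
Local Open Scope ring_scope.

Section Enorm.
Variables (R : realType) (d : nat).
Implicit Types (u v w : 'rV[R]_d).

Lemma sumsq_ge0 (a : 'I_d -> R) : 0 <= \sum_i a i ^+ 2.
Proof. by rewrite sumr_ge0 // => i _; exact: sqr_ge0. Qed.

Lemma enorm_ge0 v : 0 <= enorm v.
Proof. exact: sqrtr_ge0. Qed.

Lemma enorm0 : enorm (0 : 'rV[R]_d) = 0.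
Proof. by rewrite /enorm big1 ?sqrtr0 // => i _; rewrite mxE expr0n. Qed.

Lemma enorm_eq0 v : enorm v = 0 -> v = 0.
Proof.
move/eqP; rewrite /enorm sqrtr_eq0 => H.
have H0 : \sum_(i < d) v ord0 i ^+ 2 = 0.
  by apply/eqP; rewrite eq_le H sumr_ge0 // => i _; exact: sqr_ge0.
apply/rowP => i; rewrite mxE.
have := (psumr_eq0P (fun i _ => sqr_ge0 (v ord0 i)) H0 (i:=i) isT).
by move/eqP; rewrite sqrf_eq0 => /eqP.
Qed.

Lemma enormN v : enorm (- v) = enorm v.
Proof. by rewrite /enorm; congr Num.sqrt; apply: eq_bigr => i _; rewrite mxE sqrrN. Qed.

Lemma enormB u v : enorm (u - v) = enorm (v - u).
Proof. by rewrite -enormN opprB. Qed.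

Lemma enormZ (c : R) v : enorm (c *: v) = `|c| * enorm v.
Proof.
rewrite /enorm (eq_bigr (fun i => c ^+ 2 * v ord0 i ^+ 2)); last first.
  by move=> i _; rewrite mxE exprMn.
rewrite -mulr_sumr sqrtrM ?sqr_ge0 // sqrtr_sqr //.
Qed.

Lemma coord_le_enorm v i : `|v ord0 i| <= enorm v.
Proof.
rewrite /enorm -sqrtr_sqr ler_sqrt ?sumsq_ge0 //.
rewrite (bigD1 i) //= lerDl sumr_ge0 // => j _; exact: sqr_ge0.
Qed.

Lemma cauchy_schwarz (a b : 'I_d -> R) :
  \sum_i a i * b i <= Num.sqrt (\sum_i a i ^+ 2) * Num.sqrt (\sum_i b i ^+ 2).
Proof.
set A := \sum_i a i ^+ 2; set B := \sum_i b i ^+ 2; set D := \sum_i a i * b i.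
have A0 : 0 <= A by rewrite sumr_ge0 // => i _; exact: sqr_ge0.
have B0 : 0 <= B by rewrite sumr_ge0 // => i _; exact: sqr_ge0.
have [B00|Bpos] := eqVneq B 0.
  have bi0 i : b i = 0.
    have := psumr_eq0P (fun i _ => sqr_ge0 (b i)) B00 (i:=i) isT.
    by move/eqP; rewrite sqrf_eq0 => /eqP.
  rewrite /D big1 ?mulr_ge0 ?sqrtr_ge0 // => i _; by rewrite bi0 mulr0.
have Bgt : 0 < B by rewrite lt_neqAle eq_sym Bpos B0.
have key : forall l : R, 0 <= A - 2 * l * D + l ^+ 2 * B.
  move=> l; have <- : \sum_i (a i - l * b i) ^+ 2 = A - 2 * l * D + l ^+ 2 * B.
    rewrite (eq_bigr (fun i => a i ^+ 2 - (2 * l) * (a i * b i) + l ^+ 2 * b i ^+ 2)); last by move=> i _; ring.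
    by rewrite !big_split /= sumrN -!mulr_sumr.
  by rewrite sumr_ge0 // => i _; exact: sqr_ge0.
have := key (D / B).
have -> : A - 2 * (D / B) * D + (D / B) ^+ 2 * B = A - D ^+ 2 / B.
  by field; rewrite Bpos.
rewrite subr_ge0 ler_pdivrMr // => HD.
rewrite -sqrtrM //; have [D0|D0] := leP D 0.
  by apply: le_trans D0 (sqrtr_ge0 _).
by rewrite -(ger0_norm (ltW D0)) -sqrtr_sqr ler_sqrt ?mulr_ge0.
Qed.

Lemma enormD u v : enorm (u + v) <= enorm u + enorm v.
Proof.
have h0 : 0 <= enorm u + enorm v by rewrite addr_ge0 ?enorm_ge0.
rewrite -(ger0_norm h0) -sqrtr_sqr /enorm ler_sqrt ?sqr_ge0 // sqrrD !sqr_sqrtr ?sumsq_ge0 //.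
rewrite (eq_bigr (fun i => u ord0 i ^+ 2 + 2 * (u ord0 i * v ord0 i) + v ord0 i ^+ 2)); last first.
  by move=> i _; rewrite mxE sqrrD mulr2n mulrDl mul1r; ring.
rewrite !big_split /= -mulr_sumr lerD2r lerD2l.
have := (cauchy_schwarz (fun i => u ord0 i) (fun i => v ord0 i)); rewrite mulr2n; lra.
Qed.

Lemma enorm_lip u v : `|enorm u - enorm v| <= enorm (u - v).
Proof.
rewrite ler_norml; apply/andP; split.
  have := enormD (v - u) u; rewrite subrK enormB; lra.
have := enormD (u - v) v; rewrite subrK; lra.
Qed.

Lemma mx_norm_le_enorm v : `|v| <= enorm v.
Proof.
rewrite [`|v|]mx_normrE; apply: bigmax_le; first exact: enorm_ge0.
by move=> [i j] _ /=; rewrite (ord1 i); exact: coord_le_enorm.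
Qed.

Lemma enorm_le_mx_norm v : enorm v <= (d%:R + 1) * `|v|.
Proof.
have n0 : 0 <= `|v| by [].
have h0 : 0 <= (d%:R + 1) * `|v| by rewrite mulr_ge0 // addr_ge0.
rewrite -(ger0_norm h0) -sqrtr_sqr /enorm ler_sqrt ?sqr_ge0 //.
have c i : v ord0 i ^+ 2 <= `|v| ^+ 2.
  have h : `|v ord0 i| <= `|v|.
    by rewrite [X in _ <= X]mx_normrE; apply: le_trans (le_bigmax _ _ (ord0, i)) => //.
  have h2 : v ord0 i ^+ 2 = `|v ord0 i| ^+ 2 by rewrite real_normK ?num_real.
  have h3 : 0 <= `|v ord0 i| by [].
  rewrite h2; nra.
apply: le_trans (ler_sum _ (fun i _ => c i)) _.
rewrite sumr_const card_ord -[X in X <= _]mulr_natl.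
have hd : 0 <= (d%:R : R) by [].
have hx : 0 <= `|v| ^+ 2 by rewrite sqr_ge0.
set x := `|v|; set D := (d%:R : R).
have : 0 <= (D ^+ 2 + D + 1) * x ^+ 2 by rewrite mulr_ge0 // !addr_ge0 ?sqr_ge0.
nra.
Qed.

End Enorm.

Section Bridges.
Variables (R : realType) (n : nat).
Implicit Types (A : set 'rV[R]_n) (v : 'rV[R]_n).

Lemma closed_approx A v : closed A ->
  (forall e : R, 0 < e -> exists2 a, A a & enorm (v - a) < e) -> A v.
Proof.
move=> cA H; apply: cA => B /nbhs_ballP [e e0 sB].
have [a Aa ha] := H e e0; exists a; split => //; apply: sB.
rewrite -ball_normE /ball_ /=; exact: le_lt_trans (mx_norm_le_enorm _) ha.
Qed.

Lemma approx_closed A :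
  (forall v, (forall e : R, 0 < e -> exists2 a, A a & enorm (v - a) < e) -> A v) ->
  closed A.
Proof.
move=> H v cv; apply: H => e e0.
have K0 : 0 < (n%:R + 1 : R) by rewrite ltr_pwDr.
have : nbhs v (ball v (e / (n%:R + 1))) by apply: nbhsx_ballx; rewrite divr_gt0.
move=> /cv [a [Aa ba]]; exists a => //.
move: ba; rewrite -ball_normE /ball_ /= => ba.
apply: le_lt_trans (enorm_le_mx_norm _) _.
by rewrite mulrC -ltr_pdivlMr.
Qed.

Lemma ulim_ex (U : set_system nat) (UU : UltraFilter U) (x : nat -> 'rV[R]_n) (M : R) :
  U [set j | enorm (x j) <= M] ->
  exists y, forall e : R, 0 < e -> U [set j | enorm (x j - y) < e].
Proof.
move=> UM.
pose Box := [set v : 'rV[R]_n | forall i : 'I_n, `[- M, M]%classic (v ord0 i)].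
have cB : compact Box.
  by apply: (@rV_compact _ _ (fun=> `[- M, M]%classic)) => _; exact: segment_compact.
have FB : U (x @^-1` Box).
  apply: (filterS _ UM) => j /= hj i; rewrite /= in_itv /= -ler_norml.
  exact: le_trans (coord_le_enorm _ _) hj.
have [p [_ clp]] := cB (x @ U) _ FB.
exists p => e e0.
have K0 : 0 < (n%:R + 1 : R) by rewrite ltr_pwDr.
have [//|Uc] := in_ultra_setVsetC [set j | enorm (x j - p) < e] UU.
exfalso.
have Fc : U (x @^-1` (x @` (~` [set j | enorm (x j - p) < e]))).
  by apply: (filterS _ Uc) => j hj; exists j.
have nb : nbhs p (ball p (e / (n%:R + 1))) by apply: nbhsx_ballx; rewrite divr_gt0.
have [_ [[j hj <-] bj]] := clp _ _ Fc nb.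
apply: hj; move: bj; rewrite -ball_normE /ball_ /= => bj.
rewrite enormB; apply: le_lt_trans (enorm_le_mx_norm _) _.
by rewrite mulrC -ltr_pdivlMr.
Qed.

End Bridges.

Section Exc.
Variables (R : realType) (n : nat).
Implicit Types (A B : set 'rV[R]_n) (v : 'rV[R]_n).

Lemma edist_le_exc A B a : A a -> (edist_set a B <= exc A B)%E.
Proof. by move=> Aa; apply: ereal_sup_ubound; right; exists a. Qed.

Lemma edist_pt B a (e : R) : (edist_set a B < e%:E)%E -> exists2 b, B b & enorm (a - b) < e.
Proof.
move=> /ereal_inf_lt [y [b Bb <-]]; rewrite lte_fin => h; by exists b.
Qed.

Lemma exc_pt A B a (e : R) : A a -> (exc A B < e%:E)%E -> exists2 b, B b & enorm (a - b) < e.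
Proof. by move=> Aa h; apply: edist_pt; exact: le_lt_trans (edist_le_exc B Aa) h. Qed.

Lemma edist_le B a b : B b -> (edist_set a B <= (enorm (a - b))%:E)%E.
Proof. by move=> Bb; apply: ereal_inf_lbound; exists b. Qed.

Lemma exc_ge0 A B : (0 <= exc A B)%E.
Proof. by apply: ereal_sup_ubound; left. Qed.

Lemma exc_le A B (e : R) : 0 <= e ->
  (forall a, A a -> exists2 b, B b & enorm (a - b) <= e) -> (exc A B <= e%:E)%E.
Proof.
move=> e0 H; apply: ge_ereal_sup => x [-> | [a Aa <-]]; first by rewrite lee_fin.
have [b Bb hb] := H a Aa.
by apply: le_trans (edist_le a Bb) _; rewrite lee_fin.
Qed.

Lemma exc_cvg_near (Ak Bk : nat -> set 'rV[R]_n) :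
  ((fun k => exc (Ak k) (Bk k)) @ \oo --> 0%E) ->
  forall e : R, 0 < e -> \forall k \near \oo, (exc (Ak k) (Bk k) < e%:E)%E.
Proof.
move=> /fine_cvgP [fin /cvgr0Pnorm_lt cv] e e0.
near=> k.
have fk : exc (Ak k) (Bk k) \is a fin_num by near: k.
have hk : `|fine (exc (Ak k) (Bk k))| < e by near: k; exact: cv.
rewrite -(fineK fk) lte_fin; exact: le_lt_trans (ler_norm _) hk.
Unshelve. all: end_near.
Qed.

Lemma exc_near_cvg (Ak Bk : nat -> set 'rV[R]_n) :
  (forall e : R, 0 < e -> \forall k \near \oo, (exc (Ak k) (Bk k) <= e%:E)%E) ->
  ((fun k => exc (Ak k) (Bk k)) @ \oo --> 0%E).
Proof.
move=> H; apply/fine_cvgP; split.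
  near=> k.
  have h1 : (exc (Ak k) (Bk k) <= 1%:E)%E by near: k; exact: H.
  by rewrite ge0_fin_numE ?exc_ge0 // (le_lt_trans h1) ?ltry.
apply/cvgr0Pnorm_lt => e e0.
near=> k.
have h1 : (exc (Ak k) (Bk k) <= (e / 2)%:E)%E by near: k; apply: H; rewrite divr_gt0.
have g0 := exc_ge0 (Ak k) (Bk k).
have fk : exc (Ak k) (Bk k) \is a fin_num.
  by rewrite ge0_fin_numE // (le_lt_trans h1) ?ltry.
move: h1 g0; rewrite -(fineK fk) !lee_fin /= => h1 g0.
rewrite ger0_norm //; apply: le_lt_trans h1 _; rewrite ltr_pdivrMr //; lra.
Unshelve. all: end_near.
Qed.

End Exc.

Section Pow.
Variables (R : realType) (b : R).
Hypothesis b0 : 0 < b.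

Lemma powK1 (x : R) : 0 <= x -> (x `^ b^-1) `^ b = x.
Proof. by move=> x0; rewrite -powRrM mulVf ?gt_eqF // powRr1. Qed.

Lemma powK2 (x : R) : 0 <= x -> (x `^ b) `^ b^-1 = x.
Proof. by move=> x0; rewrite -powRrM mulfV ?gt_eqF // powRr1. Qed.

Lemma powlt (x y : R) : 0 <= x -> 0 <= y -> x < y -> x `^ b < y `^ b.
Proof. by move=> x0 y0 xy; apply: gt0_ltr_powR. Qed.

Lemma powle (x y : R) : 0 <= x -> 0 <= y -> x <= y -> x `^ b <= y `^ b.
Proof. by move=> x0 y0 xy; apply: ge0_ler_powR => //; exact: ltW. Qed.

Lemma powlt_inv (x y : R) : 0 <= x -> 0 <= y -> x `^ b < y `^ b -> x < y.
Proof.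
move=> x0 y0 h; rewrite ltNge; apply/negP => yx.
by have := powle y0 x0 yx; rewrite leNgt h.
Qed.

Lemma powle_inv (x y : R) : 0 <= x -> 0 <= y -> x `^ b <= y `^ b -> x <= y.
Proof.
move=> x0 y0 h; rewrite leNgt; apply/negP => yx.
by have := powlt y0 x0 yx; rewrite ltNge h.
Qed.

Lemma pow_le_inv (x K : R) : 0 <= x -> 0 <= K -> x `^ b <= K -> x <= K `^ b^-1.
Proof.
move=> x0 K0 h; apply: powle_inv => //; first exact: powR_ge0.
by rewrite powK1.
Qed.

Lemma pow_small (e : R) : 0 < e ->
  exists2 dl : R, 0 < dl & forall a, 0 <= a -> a < dl -> a `^ b < e.
Proof.
move=> e0; exists (e `^ b^-1); first by rewrite powR_gt0.
move=> a a0 ha; rewrite -(powK1 (ltW e0)); apply: powlt => //.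
exact: powR_ge0.
Qed.

Lemma pow_cont (A e : R) : 0 <= A -> 0 < e ->
  exists2 dl : R, 0 < dl & forall a, 0 <= a -> `|a - A| < dl -> `|a `^ b - A `^ b| < e.
Proof.
move=> A0 e0; have P0 : 0 <= A `^ b by exact: powR_ge0.
have u0 : 0 <= (A `^ b + e / 2) `^ b^-1 by exact: powR_ge0.
have ub : ((A `^ b + e / 2) `^ b^-1) `^ b = A `^ b + e / 2 by rewrite powK1 // addr_ge0 // divr_ge0 // ltW.
move: ((A `^ b + e / 2) `^ b^-1) u0 ub => u u0 ub.
have Au : A < u by apply: powlt_inv => //; rewrite ub; lra.
have [Pl|Pl] := ltP 0 (A `^ b - e / 2).
  have l0 : 0 <= (A `^ b - e / 2) `^ b^-1 by exact: powR_ge0.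
  have lb : ((A `^ b - e / 2) `^ b^-1) `^ b = A `^ b - e / 2 by rewrite powK1 // ltW.
  move: ((A `^ b - e / 2) `^ b^-1) l0 lb => l l0 lb.
  have lA : l < A by apply: powlt_inv => //; rewrite lb; lra.
  exists (Num.min (u - A) (A - l)); first by rewrite lt_min !subr_gt0 Au lA.
  move=> a a0; rewrite lt_min => /andP [h1 h2].
  have h1' : a < u by move: h1 => /ltr_normlW; lra.
  have h2' : l < a by move: h2; rewrite ltr_norml; lra.
  have := powlt a0 u0 h1'; have := powlt l0 a0 h2'; rewrite ub lb => q1 q2.
  rewrite ltr_norml; apply/andP; split; lra.
exists (u - A); first by rewrite subr_gt0.
move=> a a0 h1; have h1' : a < u by move: h1 => /ltr_normlW; lra.
have := powlt a0 u0 h1'; rewrite ub => q2.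
have := powR_ge0 a b => q1.
rewrite ltr_norml; apply/andP; split; lra.
Qed.

End Pow.

Section Misc.
Variables (R : realType).

Lemma blowupP n (A : set 'rV[R]_n) (x u : 'rV[R]_n) (r : R) : 0 < r ->
  blowup A x r u <-> A (x + r *: u).
Proof.
move=> r0; split.
  by move=> [y Ay <-]; rewrite scalerA mulfV ?gt_eqF // scale1r addrC subrK.
move=> Axu; exists (x + r *: u) => //.
by rewrite addrC addKr scalerA mulVf ?gt_eqF // scale1r.
Qed.

Lemma enorm_tri n (a b c : 'rV[R]_n) : enorm (a - c) <= enorm (a - b) + enorm (b - c).
Proof. by have := enormD (a - b) (b - c); rewrite addrA subrK. Qed.

Lemma harm_small (e : R) : 0 < e -> \forall k \near \oo, (k.+1%:R : R)^-1 < e.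
Proof.
move=> e0; have := @cvg_harmonic R; move/cvgr0Pnorm_lt => /(_ e e0).
apply: filterS => k; rewrite /harmonic /= ger0_norm //.
Qed.

Lemma small_eq0 (x : R) : 0 <= x -> (forall e : R, 0 < e -> x < e) -> x = 0.
Proof.
move=> x0 H; apply/eqP; rewrite eq_le x0 andbT.
apply/ler_addgt0Pr => e e0; rewrite add0r; exact: ltW (H e e0).
Qed.

Lemma enorm_small n (a b : 'rV[R]_n) : (forall e : R, 0 < e -> enorm (a - b) < e) -> a = b.
Proof.
move=> H; apply/eqP; rewrite -subr_eq0; apply/eqP; apply: enorm_eq0.
exact: small_eq0 (enorm_ge0 _) H.
Qed.

Lemma lin_low (cq cp ck y x a1 a2 a3 e : R) : cq <= cp + ck -> ck <= e / 2 -> cp <= y ->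
  y <= a1 + a2 -> a2 <= x + a3 -> a1 < e / 4 -> a3 < e / 4 -> cq <= x + e.
Proof. move=> *; lra. Qed.

Lemma lin_up (cq cp ck y x a1 a2 a3 e : R) : x <= a1 + a2 -> a2 <= y + a3 -> y <= cp ->
  cp <= cq + ck -> ck = e / 2 -> a1 < e / 4 -> a3 < e / 4 -> x <= cq + e.
Proof. move=> *; lra. Qed.

Lemma L1 (a b c : R) : a <= b + c -> b < 1 -> a <= c + 1.
Proof. move=> *; lra. Qed.
Lemma L2 (a b c dd : R) : a <= b + c -> b < dd / 2 -> c < dd / 2 -> a < dd.
Proof. move=> *; lra. Qed.
Lemma L2' (b c dd : R) : b < dd / 2 -> c < dd / 2 -> b + c < dd.
Proof. move=> *; lra. Qed.
Lemma L3 (a b c p e : R) : a <= b + c -> b <= p -> p < e / 2 -> c < e / 2 -> a < e.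
Proof. move=> *; lra. Qed.
Lemma L4 (P Q k : R) : - k < P - Q -> Q <= P + k.
Proof. move=> *; lra. Qed.
Lemma L5 (P Q k : R) : P - Q < k -> P <= Q + k.
Proof. move=> *; lra. Qed.
Lemma L6 (a b c q : R) : a <= b + c -> b < q -> q <= 1 -> a <= c + 1.
Proof. move=> *; lra. Qed.
Lemma L7 (a b c q p e : R) : a <= b + c -> b < q -> q < e / 2 -> c <= p -> p < e / 2 -> a < e.
Proof. move=> *; lra. Qed.

End Misc.

Section Main.
Variables (R : realType) (d m : nat) (b : R) (X : set 'rV[R]_d) (Y : set 'rV[R]_m)
  (f : 'rV[R]_d -> 'rV[R]_m) (C : R) (x0 : 'rV[R]_d) (T : set 'rV[R]_d) (rs : nat -> R)
  (U : set_system nat).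
Hypotheses (b0 : 0 < b) (C1 : 1 <= C)
  (fXY : forall x, X x -> Y (f x))
  (fsurj : forall y, Y y -> exists2 x, X x & f x = y)
  (fhol : forall x y, X x -> X y ->
        C^-1 * (enorm (x - y)) `^ b <= enorm (f x - f y) /\
        enorm (f x - f y) <= C * (enorm (x - y)) `^ b)
  (Xx0 : X x0) (cT : closed T) (T0 : T 0)
  (rs0 : forall j, 0 < rs j) (rsdec : {homo rs : i j / (i <= j)%N >-> j <= i})
  (rscv : rs @ \oo --> 0)
  (AW : AW_cvg (fun j => blowup X x0 (rs j)) T)
  (UU : UltraFilter U) (Uinf : \oo `<=` U).

Let C0 : 0 < C. Proof. exact: lt_le_trans ltr01 C1. Qed.
Let Ci0 : 0 < C^-1. Proof. by rewrite invr_gt0. Qed.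
Let Ci1 : C^-1 <= 1. Proof. by rewrite invr_le1 // ?unitfE ?gt_eqF. Qed.

Definition s j := rs j `^ b.
Definition Gx j u := X (x0 + rs j *: u).
Definition gj j u := (s j)^-1 *: (f (x0 + rs j *: u) - f x0).

Lemma s_gt0 j : 0 < s j.
Proof. exact: powR_gt0. Qed.

Lemma Gx0 j : Gx j 0.
Proof. by rewrite /Gx scaler0 addr0. Qed.

Lemma gj0 j : gj j 0 = 0.
Proof. by rewrite /gj scaler0 addr0 subrr scaler0. Qed.

Lemma gj_hol j u v : Gx j u -> Gx j v ->
  C^-1 * (enorm (u - v)) `^ b <= enorm (gj j u - gj j v) /\
  enorm (gj j u - gj j v) <= C * (enorm (u - v)) `^ b.
Proof.
move=> Gu Gv; have [h1 h2] := fhol Gu Gv.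
have -> : gj j u - gj j v = (s j)^-1 *: (f (x0 + rs j *: u) - f (x0 + rs j *: v)).
  by rewrite /gj -scalerBr; congr (_ *: _); rewrite opprB addrA subrK.
have E : x0 + rs j *: u - (x0 + rs j *: v) = rs j *: (u - v).
  by rewrite scalerBr opprD addrACA subrr add0r.
rewrite E in h1 h2; move: h1 h2; rewrite !enormZ powRM ?enorm_ge0 ?(ltW (rs0 j)) //.
rewrite !ger0_norm ?invr_ge0 ?(ltW (s_gt0 j)) ?(ltW (rs0 j)) // -/(s j).
have sj := s_gt0 j.
set A := enorm _; set P := _ `^ b; set Q := enorm _.
move=> h1 h2; split.
  rewrite -(ler_pM2l sj) [X in _ <= X]mulrA mulfV ?gt_eqF // mul1r mulrCA; exact: h1.
rewrite -(ler_pM2l sj) mulrA mulfV ?gt_eqF // mul1r mulrCA; exact: h2.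
Qed.

Lemma gj_Y j u : Gx j u -> Y (f x0 + s j *: gj j u).
Proof.
move=> Gu; rewrite /gj scalerA mulfV ?gt_eqF ?s_gt0 // scale1r addrC subrK.
exact: fXY.
Qed.

Lemma Y_gj j y : Y (f x0 + s j *: y) -> exists2 u, Gx j u & gj j u = y.
Proof.
move=> /fsurj [x Xx fx]; exists ((rs j)^-1 *: (x - x0)).
  by rewrite /Gx scalerA mulfV ?gt_eqF // scale1r addrC subrK.
rewrite /gj scalerA mulfV ?gt_eqF // scale1r [x0 + _]addrC subrK fx.
by rewrite addrAC subrr add0r scalerA mulVf ?gt_eqF ?s_gt0 // scale1r.
Qed.

Lemma AWX1 (rho e : R) : 0 < rho -> 0 < e -> \forall j \near \oo,
  forall u, Gx j u -> enorm u <= rho -> exists2 v, T v & enorm (u - v) < e.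
Proof.
move=> rho0 e0; have [h _] := AW rho0.
apply: filterS (exc_cvg_near h e0) => j hj u Gu ur.
apply: exc_pt hj; split => //; exact/blowupP.
Qed.

Lemma AWX2 (rho e : R) : 0 < rho -> 0 < e -> \forall j \near \oo,
  forall v, T v -> enorm v <= rho -> exists2 u, Gx j u & enorm (v - u) < e.
Proof.
move=> rho0 e0; have [_ h] := AW rho0.
apply: filterS (exc_cvg_near h e0) => j hj v Tv vr.
have [u bu hu] := exc_pt (conj Tv vr) hj.
by exists u => //; move: bu => /blowupP; apply.
Qed.


Definition Xj j := blowup X x0 (rs j).

Lemma XjP j u : Xj j u <-> Gx j u.
Proof. exact: blowupP. Qed.

Lemma edist_ge0 n (a : 'rV[R]_n) B : (0 <= edist_set a B)%E.
Proof. by apply/ereal_infP => _ [c _ <-]; rewrite lee_fin enorm_ge0. Qed.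

Lemma edist_fin v j : edist_set v (Xj j) \is a fin_num.
Proof.
rewrite ge0_fin_numE ?edist_ge0 //.
apply: le_lt_trans (edist_le v (_ : Xj j 0)) _; first by apply/XjP/Gx0.
exact: ltry.
Qed.

Lemma approx_ex v j : exists u, Gx j u /\
  enorm (v - u) < fine (edist_set v (Xj j)) + (j.+1%:R)^-1.
Proof.
have e0 : 0 < (j.+1%:R : R)^-1 by rewrite invr_gt0.
have [x [u Xu <-]] := lb_ereal_inf_adherent e0 (edist_fin v j).
rewrite -/(edist_set v (Xj j)) -(fineK (edist_fin v j)) -EFinD lte_fin => h.
by exists u; split => //; exact/XjP.
Qed.

Definition ap v j := projT1 (cid (approx_ex v j)).

Lemma ap_G v j : Gx j (ap v j).
Proof. by have [] := projT2 (cid (approx_ex v j)). Qed.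

Lemma ap_lt v j : enorm (v - ap v j) < fine (edist_set v (Xj j)) + (j.+1%:R)^-1.
Proof. by have [] := projT2 (cid (approx_ex v j)). Qed.

Lemma ap_cvg v : T v -> forall e : R, 0 < e -> \forall j \near \oo, enorm (v - ap v j) < e.
Proof.
move=> Tv e e0.
have rho0 : 0 < enorm v + 1 by rewrite ltr_pwDr ?enorm_ge0.
have e20 : 0 < e / 2 by rewrite divr_gt0.
have [_ h] := AW rho0.
near=> j.
have h1 : (exc (T `&` cball0 (enorm v + 1)) (Xj j) < (e / 2)%:E)%E.
  by near: j; exact: exc_cvg_near h _ e20.
have h2 : (j.+1%:R : R)^-1 < e / 2 by near: j; exact: harm_small.
have Tv' : (T `&` cball0 (enorm v + 1)) v by split => //; rewrite /cball0 /= lerDl.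
have h3 := le_lt_trans (edist_le_exc (Xj j) Tv') h1.
have h4 : fine (edist_set v (Xj j)) < e / 2.
  by rewrite -lte_fin fineK ?edist_fin.
apply: (lt_trans (ap_lt v j)); rewrite [X in _ < X]splitr; exact: ltrD h4 h2.
Unshelve. all: end_near.
Qed.

Lemma ap_bound v : T v -> \forall j \near \oo, enorm (ap v j) <= enorm v + 1.
Proof.
move=> Tv; apply: filterS (ap_cvg Tv ltr01) => j hj.
have t := enorm_tri (ap v j) v 0; rewrite !subr0 (enormB (ap v j) v) in t; exact: L1 t hj.
Qed.

Lemma g_ex v : exists y, T v -> forall e : R, 0 < e ->
  U [set j | enorm (gj j (ap v j) - y) < e].
Proof.
have [Tv|nTv] := pselect (T v); last by exists 0.
suff [y hy] : exists y, forall e : R, 0 < e -> U [set j | enorm (gj j (ap v j) - y) < e].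
  by exists y.
apply: (@ulim_ex R m U UU _ (C * (enorm v + 1) `^ b)).
apply: Uinf; apply: filterS (ap_bound Tv) => j hj.
have [_ h] := gj_hol (ap_G v j) (Gx0 j).
rewrite gj0 !subr0 in h; apply: le_trans h _.
rewrite ler_pM2l //; apply: powle => //; rewrite ?enorm_ge0 //.
by rewrite addr_ge0 ?enorm_ge0.
Qed.

Definition g v := projT1 (cid (g_ex v)).

Lemma g_spec v : T v -> forall e : R, 0 < e -> U [set j | enorm (gj j (ap v j) - g v) < e].
Proof. exact: projT2 (cid (g_ex v)). Qed.

Lemma keyL v e : T v -> 0 < e -> exists2 dl : R, 0 < dl &
  U [set j | forall w, Gx j w -> enorm (w - v) < dl -> enorm (gj j w - g v) < e].
Proof.
move=> Tv e0.
have e20 : 0 < e / 2 by rewrite divr_gt0.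
have eC : 0 < e / 2 / C by rewrite divr_gt0.
have [dl0 dl00 hdl] := pow_small b0 eC.
exists (dl0 / 2); first by rewrite divr_gt0.
have dl020 : 0 < dl0 / 2 by rewrite divr_gt0.
have U1 := Uinf (ap_cvg Tv dl020); have U2 := g_spec Tv e20.
apply: (filterS _ (filterI U1 U2)) => j [/= h1 h2] w Gw hw.
have h3 : enorm (w - ap v j) < dl0.
  exact: L2 (enorm_tri w v (ap v j)) hw h1.
have [_ h4] := gj_hol Gw (ap_G v j).
have h5 := hdl _ (enorm_ge0 _) h3.
have h6 : C * enorm (w - ap v j) `^ b < e / 2.
  by rewrite mulrC -ltr_pdivlMr.
exact: L3 (enorm_tri _ _ _) h4 h6 h2.
Qed.

Lemma Uex (P : set nat) : U P -> exists j, P j.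
Proof. by move=> UP; exact: (@filter_ex _ U _ P UP). Qed.

Lemma g0 : g 0 = 0.
Proof.
apply/esym/enorm_small => e e0.
have [dl dl0 Ud] := keyL T0 e0.
have [j hj] := Uex Ud.
have := hj 0 (Gx0 j); rewrite subrr enorm0 gj0 => /(_ dl0); by [].
Qed.

Lemma g_hol u v : T u -> T v ->
  C^-1 * (enorm (u - v)) `^ b <= enorm (g u - g v) /\
  enorm (g u - g v) <= C * (enorm (u - v)) `^ b.
Proof.
move=> Tu Tv.
have key : forall e : R, 0 < e -> exists j,
    [/\ enorm (gj j (ap u j) - g u) < e / 4, enorm (gj j (ap v j) - g v) < e / 4 &
        `|enorm (ap u j - ap v j) `^ b - enorm (u - v) `^ b| < e / (2 * C)].
  move=> e e0.
  have e40 : 0 < e / 4 by rewrite divr_gt0.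
  have eC : 0 < e / (2 * C) by rewrite divr_gt0 // mulr_gt0.
  have [dl dl0 hdl] := pow_cont b0 (enorm_ge0 (u - v)) eC.
  have dl20 : 0 < dl / 2 by rewrite divr_gt0.
  have U1 := g_spec Tu e40; have U2 := g_spec Tv e40.
  have U3 := Uinf (ap_cvg Tu dl20); have U4 := Uinf (ap_cvg Tv dl20).
  have [j [[[h1 h2] h3] h4]] := Uex (filterI (filterI (filterI U1 U2) U3) U4).
  exists j; split => //; apply: hdl; first exact: enorm_ge0.
  apply: le_lt_trans (enorm_lip _ _) _.
  have -> : ap u j - ap v j - (u - v) = (ap u j - u) + (v - ap v j).
    by apply/rowP => i; rewrite !mxE; ring.
  apply: le_lt_trans (enormD _ _) _; rewrite enormB.
  move: h3 h4 => /= h3 h4; exact: L2' h3 h4.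
have Csplit e : 0 < e -> [/\ 0 < e / (2 * C), C * (e / (2 * C)) = e / 2 &
    C^-1 * (e / (2 * C)) <= e / 2].
  move=> e0; split; first by rewrite divr_gt0 // mulr_gt0.
    by field; rewrite gt_eqF.
  have -> : C^-1 * (e / (2 * C)) = e / 2 * (C^-1 * C^-1) by field; rewrite gt_eqF.
  rewrite -[leRHS]mulr1 ler_wpM2l ?divr_ge0 ?(ltW e0) //.
  have h := Ci0; have h' := Ci1; nra.
split.
  apply/ler_addgt0Pr => e e0.
  have [j [h1 h2 h3]] := key e e0.
  have [k0 k1 k2] := Csplit e e0.
  have [hl hu] := gj_hol (ap_G u j) (ap_G v j).
  move: h3; rewrite ltr_norml => /andP [h3 h3'].
  have f2 : C^-1 * enorm (u - v) `^ b <= C^-1 * enorm (ap u j - ap v j) `^ b + C^-1 * (e / (2 * C)).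
    by rewrite -mulrDr ler_wpM2l ?invr_ge0 ?(ltW C0) //; exact: L4 h3.
  have t1 := enorm_tri (gj j (ap u j)) (g u) (gj j (ap v j)).
  have t2 := enorm_tri (g u) (g v) (gj j (ap v j)).
  rewrite (enormB (g v) (gj j (ap v j))) in t2.
  exact: (lin_low f2 k2 hl t1 t2 h1 h2).
apply/ler_addgt0Pr => e e0.
have [j [h1 h2 h3]] := key e e0.
have [k0 k1 k2] := Csplit e e0.
have [hl hu] := gj_hol (ap_G u j) (ap_G v j).
move: h3; rewrite ltr_norml => /andP [h3 h3'].
have f1 : C * enorm (ap u j - ap v j) `^ b <= C * enorm (u - v) `^ b + C * (e / (2 * C)).
  by rewrite -mulrDr ler_wpM2l ?(ltW C0) //; exact: L5 h3'.
have t1 := enorm_tri (g u) (gj j (ap u j)) (g v).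
have t2 := enorm_tri (gj j (ap u j)) (gj j (ap v j)) (g v).
rewrite (enormB (g u) (gj j (ap u j))) in t1.
exact: (lin_up t1 t2 hu f1 k1 h1 h2).
Qed.

Lemma g_inj u v : T u -> T v -> g u = g v -> u = v.
Proof.
move=> Tu Tv e; have [h _] := g_hol Tu Tv; move: h; rewrite e subrr enorm0.
rewrite pmulr_rle0 // => h.
have : enorm (u - v) `^ b = 0 by apply/eqP; rewrite eq_le h powR_ge0.
move/powR_eq0_eq0/enorm_eq0/eqP; rewrite subr_eq0 => /eqP //.
Qed.

Definition Tp := g @` T.

Lemma Tp0 : Tp 0.
Proof. by exists 0 => //; exact: g0. Qed.

Lemma g_bound v (K : R) : T v -> enorm (g v) <= K -> enorm v <= (C * K) `^ b^-1.
Proof.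
move=> Tv h; have [h1 _] := g_hol Tv T0.
rewrite g0 !subr0 in h1.
have K0 : 0 <= K by exact: le_trans (enorm_ge0 _) h.
apply: pow_le_inv => //; rewrite ?enorm_ge0 ?mulr_ge0 ?(ltW C0) //.
rewrite -[X in X <= _](mulVKf (lt0r_neq0 C0)) ler_pM2l //; exact: le_trans h1 h.
Qed.

Lemma Tp_closed : closed Tp.
Proof.
apply: approx_closed => y Hy.
have /choice [vs Hvs] : forall n : nat, exists v, T v /\ enorm (y - g v) < (n.+1%:R)^-1.
  move=> n; have n0 : 0 < (n.+1%:R : R)^-1 by rewrite invr_gt0.
  have [_ [v Tv <-] h] := Hy _ n0.
  by exists v.
have bd n : enorm (vs n) <= (C * (enorm y + 1)) `^ b^-1.
  have [Tn hn] := Hvs n; apply: g_bound => //.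
  have := enorm_tri (g (vs n)) y 0; rewrite !subr0 enormB.
  have : (n.+1%:R : R)^-1 <= 1 by rewrite invr_le1 // ?unitfE // ler1n.
  move=> h t; exact: L6 t hn h.
have Ubd : U [set n | enorm (vs n) <= (C * (enorm y + 1)) `^ b^-1].
  by apply: (filterS _ filterT) => n _; exact: bd.
have [w hw] := ulim_ex UU Ubd.
have Tw : T w.
  apply: closed_approx cT _ => e e0; have [n hn] := Uex (hw e e0).
  by exists (vs n); [exact: (Hvs n).1 | rewrite enormB].
exists w => //; apply/esym/enorm_small => e e0.
have e20 : 0 < e / 2 by rewrite divr_gt0.
have eC : 0 < e / 2 / C by rewrite divr_gt0.
have [dl dl0 hdl] := pow_small b0 eC.
have [n [h1 h2]] := Uex (filterI (hw dl dl0) (Uinf (harm_small e20))).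
have [Tn hn] := Hvs n.
have [_ h3] := g_hol Tn Tw.
have h4 := hdl _ (enorm_ge0 _) h1.
have h5 : C * enorm (vs n - w) `^ b < e / 2 by rewrite mulrC -ltr_pdivlMr.
move: h2 => /= h2; exact: L7 (enorm_tri y (g (vs n)) (g w)) hn h2 h3 h5.
Qed.

Lemma claimA (rho e : R) : 0 < rho -> 0 < e ->
  U [set j | forall y, Y (f x0 + s j *: y) -> enorm y <= rho ->
     exists2 y', Tp y' & enorm (y - y') < e].
Proof.
move=> r0 e0.
have [//|UB] := in_ultra_setVsetC [set j | forall y, Y (f x0 + s j *: y) -> enorm y <= rho ->
     exists2 y', Tp y' & enorm (y - y') < e] UU.
exfalso.
pose Bad j := exists u, [/\ Gx j u, enorm (gj j u) <= rho &
  forall y', Tp y' -> e <= enorm (gj j u - y')].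
have UBad : U [set j | Bad j].
  apply: (filterS _ UB) => j /= nG.
  apply: contrapT => nB; apply: nG => y Yy ey.
  have [u Gu gu] := Y_gj Yy.
  apply: contrapT => nE; apply: nB; exists u; split => //; first by rewrite gu.
  move=> y' Ty'; rewrite leNgt; apply/negP => lt; apply: nE; exists y' => //.
  by rewrite -gu.
have /choice [bs Hbs] : forall j, exists u, Bad j -> [/\ Gx j u, enorm (gj j u) <= rho &
    forall y', Tp y' -> e <= enorm (gj j u - y')].
  by move=> j; have [[u hu]|nB] := pselect (Bad j); [exists u | exists 0].
set M := (C * rho) `^ b^-1.
have bdM j : Bad j -> enorm (bs j) <= M.
  case/Hbs => Gb hb _; have [h1 _] := gj_hol Gb (Gx0 j); rewrite gj0 !subr0 in h1.
  apply: pow_le_inv => //; rewrite ?enorm_ge0 ?mulr_ge0 ?(ltW C0) ?(ltW r0) //.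
  rewrite -[X in X <= _](mulVKf (lt0r_neq0 C0)) ler_pM2l //; exact: le_trans h1 hb.
have [w hw] := ulim_ex UU (filterS bdM UBad).
have M1 : 0 < M + 1 by rewrite ltr_pwDr ?powR_ge0.
have Tw : T w.
  apply: closed_approx cT _ => e' e'0.
  have e'20 : 0 < e' / 2 by rewrite divr_gt0.
  have [j [[Bj h1] h2]] := Uex (filterI (filterI UBad (hw _ e'20)) (Uinf (AWX1 M1 e'20))).
  have [Gb _ _] := Hbs j Bj.
  have MM : M <= M + 1 by rewrite lerDl.
  have [v Tv hv] := h2 _ Gb (le_trans (bdM j Bj) MM).
  exists v => //; have t := enorm_tri w (bs j) v; rewrite (enormB w (bs j)) in t.
  move: h1 => /= h1; exact: L2 t h1 hv.
have [dl dl0 Ud] := keyL Tw e0.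
have [j [[Bj h1] h2]] := Uex (filterI (filterI UBad Ud) (hw _ dl0)).
have [Gb _ hb] := Hbs j Bj.
have := h1 _ Gb h2; rewrite ltNge; move/negP; apply.
by apply: hb; exists w.
Qed.

Lemma claimB (rho e : R) : 0 < rho -> 0 < e ->
  U [set j | forall y', Tp y' -> enorm y' <= rho ->
     exists2 y, Y (f x0 + s j *: y) & enorm (y' - y) < e].
Proof.
move=> r0 e0.
have [//|UB] := in_ultra_setVsetC [set j | forall y', Tp y' -> enorm y' <= rho ->
     exists2 y, Y (f x0 + s j *: y) & enorm (y' - y) < e] UU.
exfalso.
pose Bad j := exists v, [/\ T v, enorm (g v) <= rho &
  forall y, Y (f x0 + s j *: y) -> e <= enorm (g v - y)].
have UBad : U [set j | Bad j].
  apply: (filterS _ UB) => j /= nG.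
  apply: contrapT => nB; apply: nG => _ [v Tv <-] hr.
  apply: contrapT => nE; apply: nB; exists v; split => //.
  move=> y Yy; rewrite leNgt; apply/negP => lt; apply: nE; exists y => //.
have /choice [vs Hvs] : forall j, exists v, Bad j -> [/\ T v, enorm (g v) <= rho &
    forall y, Y (f x0 + s j *: y) -> e <= enorm (g v - y)].
  by move=> j; have [[v hv]|nB] := pselect (Bad j); [exists v | exists 0].
have bdM j : Bad j -> enorm (vs j) <= (C * rho) `^ b^-1.
  by case/Hvs => Tv hv _; exact: g_bound.
have [w hw] := ulim_ex UU (filterS bdM UBad).
have Tw : T w.
  apply: closed_approx cT _ => e' e'0.
  have [j [Bj h1]] := Uex (filterI UBad (hw _ e'0)).
  have [Tv _ _] := Hvs j Bj.
  by exists (vs j) => //; rewrite enormB.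
have e20 : 0 < e / 2 by rewrite divr_gt0.
have [dl dl0 Ud] := keyL Tw e20.
have eC : 0 < e / 2 / C by rewrite divr_gt0.
have [dl1 dl10 hdl1] := pow_small b0 eC.
have [j [[[Bj h1] h2] h3]] :=
  Uex (filterI (filterI (filterI UBad Ud) (hw _ dl10)) (Uinf (ap_cvg Tw dl0))).
have [Tv _ hv] := Hvs j Bj.
have h3' : enorm (ap w j - w) < dl by rewrite enormB.
have h4 := h1 _ (ap_G w j) h3'.
have [_ h5] := g_hol Tv Tw.
have h6 := hdl1 _ (enorm_ge0 _) h2.
have h7 : C * enorm (vs j - w) `^ b < e / 2 by rewrite mulrC -ltr_pdivlMr.
have h8 := hv _ (gj_Y (ap_G w j)).
have t := enorm_tri (g (vs j)) (g w) (gj j (ap w j)); rewrite (enormB (g w) (gj j (ap w j))) in t.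
by move: h8; rewrite leNgt (L3 t h5 h7 h4).
Qed.

Definition Good k j :=
  (forall y, Y (f x0 + s j *: y) -> enorm y <= k.+1%:R ->
     exists2 y', Tp y' & enorm (y - y') < (k.+1%:R)^-1) /\
  (forall y', Tp y' -> enorm y' <= k.+1%:R ->
     exists2 y, Y (f x0 + s j *: y) & enorm (y' - y) < (k.+1%:R)^-1).

Lemma next_ex k N : exists j, Good k j /\ (N < j)%N.
Proof.
have k0 : 0 < (k.+1%:R : R) by [].
have k1 : 0 < (k.+1%:R : R)^-1 by rewrite invr_gt0.
have UN : U [set j | (N < j)%N] by apply: Uinf; exists N.+1 => // j /=.
have [j [[h1 h2] h3]] := Uex (filterI (filterI (claimA k0 k1) (claimB k0 k1)) UN).
by exists j.
Qed.

Definition nxt k N := projT1 (cid (next_ex k N)).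

Fixpoint J k : nat := match k with 0 => nxt 0 0 | k'.+1 => nxt k'.+1 (J k') end.

Lemma nxt_spec k N : Good k (nxt k N) /\ (N < nxt k N)%N.
Proof. exact: projT2 (cid (next_ex k N)). Qed.

Lemma J_good k : Good k (J k).
Proof. by case: k => [|k]; exact: (nxt_spec _ _).1. Qed.

Lemma J_lt k : (J k < J k.+1)%N.
Proof. exact: (nxt_spec _ _).2. Qed.

Lemma J_ge k : (k <= J k)%N.
Proof.
elim: k => // k ih; exact: leq_ltn_trans ih (J_lt k).
Qed.

Lemma J_mono i j : (i <= j)%N -> (J i <= J j)%N.
Proof.
move=> /subnK <-; elim: (j - i)%N => // n ih.
by rewrite addSn; apply: leq_trans ih (ltnW (J_lt _)).
Qed.

Lemma main_result : Tan Y (f x0) Tp /\ biHolder_homeo b T Tp g.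
Proof.
split; last first.
  split.
  - by move=> x Tx; exists x.
  - exact: g_inj.
  - by move=> y [x Tx <-]; exists x.
  - by exists C; split => // x y Tx Ty; exact: g_hol.
split; first exact: Tp_closed.
split; first exact: Tp0.
exists (fun k => s (J k)); split; first by move=> k; exact: s_gt0.
split.
  move=> i j hij; apply: powle => //; rewrite ?(ltW (rs0 _)) //.
  exact: rsdec (J_mono hij).
split.
  apply/cvgr0Pnorm_lt => e e0.
  have [dl dl0 hdl] := pow_small b0 e0.
  have := (proj1 (cvgr0Pnorm_lt rs) rscv) dl dl0; move=> [N _ HN].
  exists N => // k /= hk.
  rewrite ger0_norm ?powR_ge0 //; apply: hdl; first exact: ltW (rs0 _).
  have := HN (J k) (leq_trans hk (J_ge k)); rewrite ger0_norm //; exact: ltW (rs0 _).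
move=> r r0; split; apply: exc_near_cvg => e e0.
  near=> k.
  have h1 : (k.+1%:R : R)^-1 < r^-1 by near: k; apply: harm_small; rewrite invr_gt0.
  have h2 : (k.+1%:R : R)^-1 < e by near: k; exact: harm_small.
  have h3 : r <= k.+1%:R.
    by move: h1; rewrite ltf_pV2 ?posrE // => /ltW.
  refine (exc_le (ltW e0) _) => a [ba ra].
  move: ba => /blowupP => /(_ (s_gt0 _)) ba.
  have [y' Ty' hy'] := (J_good k).1 a ba (le_trans ra h3).
  by exists y' => //; apply: ltW; exact: lt_trans hy' h2.
near=> k.
have h1 : (k.+1%:R : R)^-1 < r^-1 by near: k; apply: harm_small; rewrite invr_gt0.
have h2 : (k.+1%:R : R)^-1 < e by near: k; exact: harm_small.
have h3 : r <= k.+1%:R.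
  by move: h1; rewrite ltf_pV2 ?posrE // => /ltW.
refine (exc_le (ltW e0) _) => a [Ta ra].
have [y Yy hy] := (J_good k).2 a Ta (le_trans ra h3).
exists y; first exact/blowupP/Yy/s_gt0.
by apply: ltW; exact: lt_trans hy h2.
Unshelve. all: end_near.
Qed.

End Main.

Unset Implicit Arguments.

Theorem lemma9p1 (R : realType) (d m : nat) (t : R) (X : set 'rV[R]_d) (Y : set 'rV[R]_m)
    (f : 'rV[R]_d -> 'rV[R]_m) :
  0 < t -> closed X -> closed Y -> biHolder_homeo t^-1 X Y f ->
  forall x0 : 'rV[R]_d, X x0 ->
  forall T : set 'rV[R]_d, Tan X x0 T ->
  exists T' : set 'rV[R]_m, Tan Y (f x0) T' /\
    exists g : 'rV[R]_d -> 'rV[R]_m, biHolder_homeo t^-1 T T' g.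
Proof.
move=> t0 _ _ [fXY _ fsurj [C [C1 fhol]]] x0 Xx0 T [cT [T0 [rs [rs0 [rsdec [rscv AW]]]]]].
have [U [UU Uinf]] := @ultraFilterLemma nat \oo eventually_filter.
have b0 : 0 < t^-1 by rewrite invr_gt0.
have [H1 H2] := main_result b0 C1 fXY fsurj fhol Xx0 cT T0 rs0 rsdec rscv AW UU Uinf.
by eexists; split; [exact: H1 | eexists; exact: H2].
Qed.
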